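(* Let $n\ge2$, $s\in(0,1)$, $0<\lambda\le\Lambda<\infty$, and let $L$ be an operator of the form $Lu(x)=\mathrm{P.V.}\int_{\mathbb{R}^n}(u(x)-u(x+y))K(y)\,dy$ with $K(y)=K(-y)$ and $\lambda|y|^{-n-2s}\le K(y)\le\Lambda|y|^{-n-2s}$ for all $y$. Let $R>0$, $0<\kappa<R$, and let $\Omega\subset\mathbb{R}^n$ be an open set satisfying property $(\mathcal{P}_{R,\kappa})$: for all $0<r<R$ and all $z\in\partial\Omega$ there exists $x_{r,z}\in\Omega^c$ with $B_{\kappa r}(x_{r,z})\subset\Omega^c\cap B_r(z)$. Then there exist $d_0=d_0(s,R,\Omega)>0$ and $c_0=c_0(n,s,\lambda,\kappa)>0$ such that \[ L\chi_\Omega(x)\ge c_0\, d_\Omega(x)^{-2s}\qquad\text{for all }x\in\Omega\text{ with } d_\Omega(x)<d_0. \]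
   Context: $\chi_\Omega$ is the indicator function of $\Omega$ and $d_\Omega(x)=\mathrm{dist}(x,\Omega^c)$. *)

(* Defs.v *)
From HB Require Import structures.
From mathcomp Require Import all_boot all_order all_algebra.
From mathcomp Require Import all_classical all_reals all_analysis.
Set Implicit Arguments. Unset Strict Implicit. Unset Printing Implicit Defensive.
Import Order.TTheory GRing.Theory Num.Theory.
Import numFieldNormedType.Exports.
Local Open Scope classical_set_scope.
Local Open Scope ring_scope.

Section Rn.
Variable R : realType.

Definition vadd n (x y : n.-tuple R) : n.-tuple R :=
  [tuple (tnth x i + tnth y i) | i < n].
Definition vsub n (x y : n.-tuple R) : n.-tuple R :=
  [tuple (tnth x i - tnth y i) | i < n].

Definition enorm n (x : n.-tuple R) : R :=
  Num.sqrt (\sum_(i < n) tnth x i ^+ 2).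

Definition eball n (x : n.-tuple R) (r : R) : set (n.-tuple R) :=
  [set y | enorm (vsub y x) < r].

Definition eopen n (O : set (n.-tuple R)) : Prop :=
  forall x, O x -> exists2 r : R, 0 < r & eball x r `<=` O.

Definition eboundary n (O : set (n.-tuple R)) : set (n.-tuple R) :=
  [set z | forall r : R, 0 < r ->
     (exists y, O y /\ eball z r y) /\ (exists y, ~ O y /\ eball z r y)].

Definition chi n (O : set (n.-tuple R)) (x : n.-tuple R) : R :=
  if `[< O x >] then 1 else 0.

(* d_O(x) = dist(x, O^c), as an extended real (+oo if O^c is empty) *)
Definition dist_compl n (O : set (n.-tuple R)) (x : n.-tuple R) : \bar R :=
  ereal_inf [set (enorm (vsub x y))%:E | y in ~` O].

Definition propP n (Rad kappa : R) (O : set (n.-tuple R)) : Prop :=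
  forall r : R, 0 < r -> r < Rad -> forall z, eboundary O z ->
    exists x, ~ O x /\ eball x (kappa * r) `<=` (~` O) `&` eball z r.

(* Iterated Lebesgue integral over R^n (n-fold, via Tonelli this is the
   integral w.r.t. n-dimensional Lebesgue measure for nonnegative
   measurable functions). *)
Fixpoint iint (n : nat) : (n.-tuple R -> \bar R) -> \bar R :=
  match n with
  | 0 => fun g => g [tuple]
  | m.+1 => fun g =>
      (\int[@lebesgue_measure R]_t iint (fun v : m.-tuple R => g (cons_tuple t v)))%E
  end.

Definition Rn_integral n (f : n.-tuple R -> \bar R) : \bar R :=
  (iint (fun y => maxe (f y) 0) - iint (fun y => maxe (- f y) 0))%E.

Definition trunc_op n (K : n.-tuple R -> R) (u : n.-tuple R -> R)
  (x : n.-tuple R) (eps : R) : \bar R :=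
  Rn_integral (fun y => if eps < enorm y then ((u x - u (vadd x y)) * K y)%:E
                        else 0%E).

Definition Lop n (K : n.-tuple R -> R) (u : n.-tuple R -> R) (x : n.-tuple R)
  : \bar R := lim (trunc_op K u x @ 0^'+).

End Rn.

(* Main.v *)
Require Import Defs.
From HB Require Import structures.
From mathcomp Require Import all_boot all_order all_algebra.
From mathcomp Require Import all_classical all_reals all_analysis.
From mathcomp.algebra_tactics Require Import ring lra.
From mathcomp Require Import zify.
Import Order.TTheory GRing.Theory Num.Theory.
Import numFieldNormedType.Exports.
Local Open Scope classical_set_scope.
Local Open Scope ring_scope.

Section H.
Context {R : realType}.
Local Open Scope ereal_scope.

Lemma int_le_noM (f g : R -> \bar R) : (forall t, 0 <= f t) -> (forall t, f t <= g t) ->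
  \int[@lebesgue_measure R]_t f t <= \int[@lebesgue_measure R]_t g t.
Proof.
move=> f0 fg.
have g0 t : 0 <= g t by apply: le_trans (fg t).
rewrite !ge0_integralTE//.
apply: le_ereal_sup => _ [h /= hf <-]; exists h => //= x.
exact: le_trans (hf x) (fg x).
Qed.

Lemma iint_ge0 m (f : m.-tuple R -> \bar R) : (forall v, 0 <= f v) -> 0 <= iint f.
Proof.
elim: m f => [|m IH] f f0 /=; first exact: f0.
by apply: integral_ge0 => t _; apply: IH.
Qed.

Lemma iint_le m (f g : m.-tuple R -> \bar R) : (forall v, 0 <= f v) ->
  (forall v, f v <= g v) -> iint f <= iint g.
Proof.
elim: m f g => [|m IH] f g f0 fg /=; first exact: fg.
apply: int_le_noM => t; first by apply: iint_ge0.
by apply: IH.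
Qed.

Lemma iint0 m : iint (fun _ : m.-tuple R => 0) = 0.
Proof.
elim: m => [|m IH] //=.
under eq_integral do rewrite IH.
exact: integral0.
Qed.

Lemma iint_box m (a b : nat -> R) (c : R) : (0 <= c)%R -> (forall k, a k <= b k)%R ->
  iint (fun v : m.-tuple R => (c * \prod_(i < m) \1_(`]a i, b i[) (tnth v i))%:E)
  = (c * \prod_(i < m) (b i - a i))%:E.
Proof.
elim: m a b c => [|m IH] a b c c0 ab /=.
  by rewrite !big_ord0.
have -> : (fun t => iint (fun v : m.-tuple R =>
     (c * \prod_(i < m.+1) \1_(`]a i, b i[) (tnth (cons_tuple t v) i))%:E))
   = (fun t => ((c * \prod_(i < m) (b i.+1 - a i.+1)) * \1_(`]a 0%N, b 0%N[) t)%:E).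
  apply: funext => t.
  have -> : (fun v : m.-tuple R =>
     (c * \prod_(i < m.+1) \1_(`]a i, b i[) (tnth (cons_tuple t v) i))%:E)
   = (fun v : m.-tuple R => ((c * \1_(`]a 0%N, b 0%N[) t) *
        \prod_(i < m) \1_(`]a i.+1, b i.+1[) (tnth v i))%:E).
    apply: funext => v; rewrite big_ord_recl mulrA; congr (_ * _ * _)%:E.
    by apply: eq_bigr => i _; rewrite tnthS.
  rewrite (IH (fun k => a k.+1) (fun k => b k.+1)) //; last first.
    by apply: mulr_ge0 => //; exact: indic_ge0.
  by congr (_%:E); rewrite mulrAC.
set k := (c * \prod_(i < m) (b i.+1 - a i.+1))%R.
have H := @integralZl_indic _ _ R (@lebesgue_measure R) setT measurableT
   (fun _ => `]a 0%N, b 0%N[%classic) k.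
rewrite /= in H; rewrite H //; last first.
  move=> kl; exfalso; move: kl; apply/negP; rewrite -leNgt.
  by apply: mulr_ge0 => //; apply: prodr_ge0 => i _; rewrite subr_ge0.
rewrite integral_indic // setIT.
have L := @lebesgue_measure_itv R `]a 0%N, b 0%N[.
rewrite /= in L.
set X := (X in k%:E * X = _).
have -> : X = (if (a 0%N)%:E < (b 0%N)%:E then (b 0%N)%:E - (a 0%N)%:E else 0) by rewrite /X -L.
rewrite lte_fin -EFinD.
case: ltgtP (ab 0%N) => //.
  by move=> h _; rewrite -EFinM big_ord_recl /k mulrA mulrAC.
by move=> e _; rewrite mule0 big_ord_recl /= e subrr mul0r mulr0.
Qed.
End H.

Section N.
Context {R : realType}.
Context {n : nat}.
Implicit Types v w x y : n.-tuple R.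

Lemma enorm_ge0 v : 0 <= enorm v.
Proof. exact: sqrtr_ge0. Qed.

Lemma coord_le v i : `|tnth v i| <= enorm v.
Proof.
rewrite /enorm -sqrtr_sqr ler_wsqrtr //.
by rewrite (bigD1 i) //= lerDl sumr_ge0 // => j _; exact: sqr_ge0.
Qed.

Lemma enorm_le v (M : R) : 0 <= M -> (forall i, `|tnth v i| <= M) ->
  enorm v <= n%:R * M.
Proof.
move=> M0 hv; rewrite /enorm -(@ger0_norm _ (n%:R * M)); last by rewrite mulr_ge0.
rewrite -sqrtr_sqr ler_wsqrtr //.
apply: (@le_trans _ _ (\sum_(i < n) M ^+ 2)).
  apply: ler_sum => i _; have := hv i; rewrite ler_norml => /andP[h1 h2]; nra.
rewrite sumr_const card_ord -[M ^+ 2 *+ n]mulr_natl exprMn.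
apply: ler_wpM2r; first exact: sqr_ge0.
rewrite expr2 -natrM ler_nat; nia.
Qed.

Lemma vsubC x y : enorm (vsub x y) = enorm (vsub y x).
Proof.
rewrite /enorm; congr Num.sqrt; apply: eq_bigr => i _.
by rewrite /vsub !tnth_mktuple -sqrrN opprB.
Qed.

Lemma enorm_scale w v (c : R) : (forall i, tnth w i = c * tnth v i) ->
  enorm w = `|c| * enorm v.
Proof.
move=> h; rewrite /enorm -sqrtr_sqr -sqrtrM ?sqr_ge0 //; congr Num.sqrt.
rewrite mulr_sumr; apply: eq_bigr => i _; by rewrite h exprMn.
Qed.

Lemma vsub_vadd x v : vsub (vadd x v) x = v.
Proof.
by apply: eq_from_tnth => i; rewrite /vsub /vadd !tnth_mktuple addrC addKr.
Qed.

Lemma enorm0 : enorm [tuple (0 : R) | _ < n] = 0.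
Proof.
rewrite /enorm big1 ?sqrtr0 // => i _; by rewrite tnth_mktuple expr0n.
Qed.


Lemma seg_boundary (Om : set (n.-tuple R)) x y : Om x -> ~ Om y ->
  exists z, eboundary Om z /\ enorm (vsub z x) <= enorm (vsub y x).
Proof.
move=> Ox Oy.
pose seg (u : R) : n.-tuple R := [tuple tnth x i + u * (tnth y i - tnth x i) | i < n].
set N := enorm (vsub y x).
have N0 : 0 <= N by exact: enorm_ge0.
have segd u t : enorm (vsub (seg u) (seg t)) = `|u - t| * N.
  apply: enorm_scale => i; rewrite /vsub !tnth_mktuple; ring.
have seg0 : seg 0 = x.
  by apply: eq_from_tnth => i; rewrite tnth_mktuple mul0r addr0.
have seg1 : seg 1 = y.
  by apply: eq_from_tnth => i; rewrite tnth_mktuple mul1r addrC subrK.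
pose S := [set t : R | (0 <= t <= 1) /\ forall u, 0 <= u <= t -> Om (seg u)].
have S0 : S 0.
  split; first by rewrite lexx ler01.
  move=> u /andP[u0 u1]; have -> : u = 0 by apply/eqP; rewrite eq_le u0 u1.
  by rewrite seg0.
have hS : has_sup S by split; [exists 0 | exists 1 => t [] /andP[]].
pose ts := sup S.
have tsub t : S t -> t <= ts by move=> St; exact: sup_upper_bound.
have ts1 : ts <= 1 by apply: ge_sup; [exists 0 | move=> t [] /andP[]].
have ts0 : 0 <= ts by exact: tsub.
have key u : 0 <= u < ts -> Om (seg u).
  move=> /andP[u0 uts].
  have tu : 0 < ts - u by rewrite subr_gt0.
  have [t St ht] := sup_adherent tu hS.
  apply: St.2; rewrite u0 /=.
  by move: ht; rewrite opprB addrC subrK => /ltW.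
have Np : 0 < N + 1 by lra.
exists (seg ts); split; last first.
  rewrite -[X in vsub _ X]seg0 segd subr0 ger0_norm //.
  by rewrite -[X in _ <= X]mul1r ler_wpM2r.
move=> r r0; split.
  have e0 : 0 < r / (N + 1) by rewrite divr_gt0.
  have [t St ht] := sup_adherent e0 hS.
  exists (seg t); split; first by apply: St.2; rewrite lexx andbT; case: St => /andP[].
  rewrite /eball /= segd.
  have tts : t <= ts by exact: tsub.
  rewrite ler0_norm ?subr_le0 //.
  rewrite -/ts in ht.
  have : (ts - t) * (N + 1) < r by rewrite -ltr_pdivlMr //; lra.
  nra.
case: (pselect (exists w, ~ Om w /\ eball (seg ts) r w)) => // H; exfalso.
have Hall w : eball (seg ts) r w -> Om w.
  by move=> b; case: (pselect (Om w)) => // nw; exfalso; apply: H; exists w.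
have [ts_1|ts_lt1] := eqVneq ts 1.
  apply: Oy; rewrite -seg1 -ts_1; apply: Hall.
  by rewrite /eball /= segd subrr normr0 mul0r.
have tl1 : ts < 1 by rewrite lt_neqAle ts_lt1 ts1.
pose e1 := Num.min (1 - ts) (r / (N + 1)).
have e1p : 0 < e1 by rewrite lt_min subr_gt0 tl1 divr_gt0.
have e1a : e1 <= 1 - ts by rewrite ge_min lexx.
have e1b : e1 <= r / (N + 1) by rewrite ge_min lexx orbT.
have e1c : e1 * (N + 1) <= r by rewrite -ler_pdivlMr.
have : S (ts + e1 / 2).
  split; first by apply/andP; split; lra.
  move=> u /andP[u0 u1].
  have [ult|uge] := ltP u ts; first by apply: key; rewrite u0 ult.
  apply: Hall; rewrite /eball /= segd ger0_norm ?subr_ge0 //.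
  nra.
move=> /tsub; lra.
Qed.

End N.

Theorem lemma3p2 (R : realType) (n : nat) (hn : (2 <= n)%N) :
  exists (c0 : R -> R -> R -> R) (d0 : R -> R -> set (n.-tuple R) -> R),
    (forall s lam kappa : R, 0 < s < 1 -> 0 < lam -> 0 < kappa ->
       0 < c0 s lam kappa) /\
    (forall (s Rad : R) (Om : set (n.-tuple R)), 0 < s < 1 -> 0 < Rad ->
       0 < d0 s Rad Om) /\
    forall (s lam Lam : R) (K : n.-tuple R -> R) (Rad kappa : R)
           (Om : set (n.-tuple R)),
      0 < s < 1 -> 0 < lam -> lam <= Lam ->
      measurable_fun setT K ->
      (forall y, K y = K (vsub [tuple (0 : R) | _ < n] y)) ->
      (forall y, y <> [tuple (0 : R) | _ < n] ->
         lam * enorm y `^ (- (n%:R) - 2 * s) <= K y /\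
         K y <= Lam * enorm y `^ (- (n%:R) - 2 * s)) ->
      0 < Rad -> 0 < kappa -> kappa < Rad ->
      eopen Om -> propP Rad kappa Om ->
      forall x, Om x ->
        (dist_compl Om x < (d0 s Rad Om)%:E)%E ->
        cvg (trunc_op K (chi Om) x @ 0^'+) /\
        ((c0 s lam kappa * (fine (dist_compl Om x)) `^ (- (2 * s)))%:E
           <= Lop K (chi Om) x)%E.
Proof.
have n0 : 0 < n%:R :> R by rewrite ltr0n; case: n hn.
exists (fun s lam kappa => lam * (n%:R * 3) `^ (- (n%:R) - 2 * s) * (kappa / n%:R) ^+ n).
exists (fun s Rad Om => Rad).
split.
  move=> s lam kappa _ l0 k0.
  rewrite mulr_gt0 ?exprn_gt0 ?divr_gt0 // mulr_gt0 // powR_gt0 // mulr_gt0 //.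
split; first by [].
move=> s lam Lam K Rad kappa Om /andP[s0 s1] lam0 lamL mK Ksym Kb Rad0 k0 kR
  Oo OP x Ox hd.
have [r0 r0p Br] := Oo x Ox.
have lbD w : ~ Om w -> r0 <= enorm (vsub x w).
  move=> nw; rewrite vsubC leNgt; apply/negP => h; apply: nw; exact: Br.
have Dge : (r0%:E <= (dist_compl Om x))%E.
  by apply: le_ereal_inf_tmp => _ [w nw <-]; rewrite lee_fin; exact: lbD.
have [d Dd] : exists d, (dist_compl Om x) = d%:E.
  move: hd Dge; case: (dist_compl Om x) => [d _ _| //|//]; by exists d.
have fD : fine (dist_compl Om x) = d by rewrite (_ : (dist_compl Om x) = d%:E) //; exact: Dd.
rewrite fD.
move: hd; rewrite (_ : dist_compl Om x = d%:E); last exact: Dd.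
rewrite lte_fin => hd.
have d0 : 0 < d by move: Dge; rewrite (_ : (dist_compl Om x) = d%:E); [rewrite lee_fin; lra | exact: Dd].
have lbd w : ~ Om w -> d <= enorm (vsub x w).
  move=> nw; rewrite -lee_fin (_ : d%:E = (dist_compl Om x)); last by rewrite Dd.
  by apply: ereal_inf_lbound; exists w.
have [_ [y ny <-] hy] : exists2 e, [set (enorm (vsub x y))%:E | y in ~` Om] e & (e < (2 * d)%:E)%E.
  by apply: ereal_inf_lt; rewrite (_ : ereal_inf _ = d%:E); [rewrite lte_fin; lra | exact: Dd].
rewrite lte_fin in hy.
have [z [zb hz]] := seg_boundary Om x y Ox ny.
have [p [np Bp]] := OP d d0 hd z zb.
pose q := kappa * d / (2 * n%:R).
pose a k := nth 0 p k - nth 0 x k - q.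
pose b k := nth 0 p k - nth 0 x k + q.
pose al := - (n%:R) - 2 * s.
pose C := lam * (n%:R * (3 * d)) `^ al.
pose f (e : R) := fun v : n.-tuple R =>
  if e < enorm v then ((chi Om x - chi Om (vadd x v)) * K v)%:E else 0%E.
have chix : chi Om x = 1 by rewrite /chi asboolT.
have chi_out w : ~ Om w -> chi Om w = 0 by move=> nw; rewrite /chi asboolF.
have chi_in w : Om w -> chi Om w = 1 by move=> ow; rewrite /chi asboolT.
have nz v : 0 < enorm v -> v <> [tuple (0 : R) | _ < n].
  by move=> h e; rewrite e enorm0 ltxx in h.
have Kge0 v : 0 < enorm v -> 0 <= K v.
  move=> h; apply: le_trans (Kb v (nz v h)).1.
  by rewrite mulr_ge0 ?powR_ge0 // ltW.
have fconst e : 0 < e < d -> f e = f (d / 2)%R.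
  move=> /andP[e0 ed]; apply: funext => v; rewrite /f.
  have [hv|hv] := ltP (enorm v) d.
    have Ow : Om (vadd x v).
      case: (pselect (Om (vadd x v))) => // no; exfalso.
      have := lbd _ no; rewrite vsubC vsub_vadd; lra.
    by rewrite chix chi_in // subrr mul0r; case: ifP; case: ifP.
  have -> : e < enorm v by lra.
  by have -> : d / 2 < enorm v by lra.
have Lcv : trunc_op K (chi Om) x @ 0^'+ --> trunc_op K (chi Om) x (d / 2).
  apply: cvg_near_cst; near=> e.
  have e0 : 0 < e by near: e; exact: nbhs_right_gt.
  have ed : e < d by near: e; exact: nbhs_right_lt.
  change (Rn_integral (f e) = Rn_integral (f (d / 2)%R)).
  by rewrite fconst // e0 ed.
split; first by apply/cvg_ex; exists (trunc_op K (chi Om) x (d / 2)).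
rewrite /Lop (cvg_lim _ Lcv) //.
have -> : trunc_op K (chi Om) x (d / 2) = Rn_integral (f (d / 2)%R) by [].
rewrite /Rn_integral.
have fge0 v : (0 <= f (d / 2)%R v)%E.
  rewrite /f; case: ifP => // h; rewrite lee_fin mulr_ge0 //.
    by rewrite chix /chi; case: asboolP => _; lra.
  apply: Kge0; lra.
have -> : ((fun y => maxe (- f (d / 2)%R y) 0) = fun _ => 0)%E.
  by apply: funext => v; rewrite max_r // oppe_le0.
rewrite iint0 sube0.
pose h := fun v : n.-tuple R => (C * \prod_(i < n) \1_(`]a i, b i[) (tnth v i))%:E.
have C0 : 0 <= C by rewrite mulr_ge0 ?powR_ge0 // ltW.
have hge0 v : (0 <= h v)%E.
  by rewrite lee_fin mulr_ge0 // prodr_ge0 // => i _; exact: indic_ge0.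
have hle v : (h v <= maxe (f (d / 2)%R v) 0)%E.
  case: (pselect (forall i : 'I_n, a i < tnth v i < b i)) => hin; last first.
    have [i hi] : exists i : 'I_n, ~ (a i < tnth v i < b i) by apply/existsNP.
    rewrite /h (bigD1 i) //=.
    have -> : \1_(`]a i, b i[%classic) (tnth v i) = 0 :> R.
      by rewrite indicE memNset //= in_itv /=; apply/negP.
    by rewrite mul0r mulr0 le_max lexx orbT.
  rewrite /h big1 ?mulr1; last first.
    by move=> i _; rewrite indicE mem_set //=; exact: hin.
  set w := vadd x v.
  have hwp : enorm (vsub w p) < kappa * d.
    apply: (@le_lt_trans _ _ (n%:R * q)).
      apply: enorm_le; first by rewrite /q divr_ge0 ?mulr_ge0 ?ltW.
      move=> i; have := hin i; rewrite /w /vsub /vadd !tnth_mktuple /a /b.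
      rewrite !(tnth_nth 0) ler_norml => /andP[h1 h2]; apply/andP; split; lra.
    have kd : 0 < kappa * d by rewrite mulr_gt0.
    have -> : n%:R * q = kappa * d / 2.
      rewrite /q; field.
      by rewrite gt_eqF.
    lra.
  have [nw bzw] := Bp w hwp.
  have ev : enorm v = enorm (vsub w x) by rewrite /w vsub_vadd.
  have dv : d <= enorm v by rewrite ev vsubC; exact: lbd.
  have vle : enorm v <= n%:R * (3 * d).
    apply: enorm_le; first lra.
    move=> i.
    have -> : tnth v i = tnth (vsub w z) i + tnth (vsub z x) i.
      by rewrite /w /vsub /vadd !tnth_mktuple; ring.
    apply: le_trans (ler_normD _ _) _.
    have := coord_le (vsub w z) i; have := coord_le (vsub z x) i.
    have : enorm (vsub y x) < 2 * d by rewrite vsubC.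
    move: bzw; rewrite /eball /=; lra.
  have hK : C <= K v.
    apply: le_trans (Kb v (nz v _)).1; last lra.
    rewrite /C; apply: ler_wpM2l; first exact: ltW.
    rewrite /al -opprD !powRN.
    have np0 : 0 < n%:R * (3 * d) by rewrite mulr_gt0 // mulr_gt0.
    rewrite lef_pV2 ?posrE ?powR_gt0 //; last lra.
    apply: ge0_ler_powR => //; first by rewrite addr_ge0 // mulr_ge0 // ltW.
      by rewrite nnegrE; exact: enorm_ge0.
    by rewrite nnegrE ltW.
  apply: le_trans (_ : f (d / 2)%R v <= _)%E; last by rewrite le_max lexx.
  rewrite /f; have -> : d / 2 < enorm v by lra.
  by rewrite chix chi_out // subr0 mul1r lee_fin.
have HH := @iint_le R n h _ hge0 hle.
apply: le_trans HH.
have q0 : 0 <= q by rewrite /q divr_ge0 ?mulr_ge0 ?ltW.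
rewrite /h iint_box //; last by move=> k; rewrite /a /b; lra.
rewrite lee_fin.
have -> : \prod_(i < n) (b i - a i) = (kappa / n%:R * d) ^+ n.
  rewrite (eq_bigr (fun _ => kappa / n%:R * d)); last first.
    move=> i _; rewrite /a /b /q; field; by rewrite gt_eqF.
  by rewrite prodr_const card_ord.
have E1 : (n%:R * (3 * d)) `^ al = (n%:R * 3) `^ al * d `^ al.
  by rewrite mulrA powRM // ?mulr_ge0 // ltW.
have E2 : d `^ (- (2 * s)) = d `^ al * d ^+ n.
  rewrite -powR_mulrn ?ltW // -powRD; last by apply/implyP => _; rewrite gt_eqF.
  by congr (_ `^ _); rewrite /al; ring.
rewrite E2 /C E1 [(kappa / n%:R * d) ^+ n]exprMn.
rewrite le_eqVlt; apply/orP; left; apply/eqP; ring.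
Unshelve. all: by end_near.
Qed.
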